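(* For every $d$-dimensional state $\rho$ and all integers $1\le k\le d$, \[ \mu_k(\rho)\le\log\big[l(\rho)+\lambda(\rho)(k-l(\rho))\big]. \]
   Context: Fixed computational basis; $\Delta$ the dephasing map; $\Pi_I=\sum_{i\in I}|i\rangle\langle i|$; logs base 2. $R^\rho=\Delta(\rho)^{-1/2}\rho\Delta(\rho)^{-1/2}$ (inverse on the support); $\mu_k(\rho)=\max_{I\subseteq[d],|I|\le k}\log\|\Pi_IR^\rho\Pi_I\|_\infty$; $l(\rho)=\max\{\mathrm{rk}(\Pi_I\Delta(\rho)\Pi_I):\ I\subseteq[d],\ \mathrm{rk}(\Pi_I\rho\Pi_I)=1\}$; $\lambda(\rho)=\max\{|R^\rho_{ij}|:1\le i<j\le d,\ |R^\rho_{ij}|<1\}$, set to $0$ if the set is empty. *)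

(* Defs.v *)
From HB Require Import structures.
From mathcomp Require Import all_boot all_order all_algebra.
From mathcomp Require Import complex.
From mathcomp Require Import all_classical all_reals all_analysis.
Set Implicit Arguments. Unset Strict Implicit. Unset Printing Implicit Defensive.
Import Order.TTheory GRing.Theory Num.Theory.
Local Open Scope ring_scope.

Section Defs.
Variable R : realType.
Local Notation C := (R[i]).
Variable d : nat.

Definition adjmx (A : 'M[C]_d) : 'M[C]_d := \matrix_(i, j) (A j i)^*.
Definition adjv (v : 'cV[C]_d) : 'rV[C]_d := \row_j (v j 0)^*.

Definition is_state (rho : 'M[C]_d) : Prop :=
  [/\ adjmx rho = rho,
      forall v : 'cV[C]_d, 0 <= (adjv v *m rho *m v) 0 0
    & \tr rho = 1].

Definition dephase (rho : 'M[C]_d) : 'M[C]_d := diag_mx (\row_i rho i i).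

(* Delta(rho)^{-1/2}, inverse taken on the support *)
Definition dephase_isqrt (rho : 'M[C]_d) : 'M[C]_d :=
  diag_mx (\row_i (if rho i i != 0 then (sqrtC (rho i i))^-1 else 0)).

Definition Rmat (rho : 'M[C]_d) : 'M[C]_d :=
  dephase_isqrt rho *m rho *m dephase_isqrt rho.

Definition proj (I : {set 'I_d}) : 'M[C]_d := diag_mx (\row_i (i \in I)%:R).

Definition cabs (x : C) : R := complex.Re `|x|.

Definition vnorm (v : 'cV[C]_d) : R := Num.sqrt (\sum_i cabs (v i 0) ^+ 2).

Definition opnorm (A : 'M[C]_d) : R :=
  sup [set r : R | exists v : 'cV[C]_d, vnorm v = 1 /\ r = vnorm (A *m v)].

Definition log2 (x : R) : R := ln x / ln 2.

(* mu_k(rho) = max_{|I|<=k} log ||Pi_I R Pi_I|| , written as log of the max *)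
Definition mu (k : nat) (rho : 'M[C]_d) : R :=
  log2 (\big[Num.max/0]_(I : {set 'I_d} | (#|I| <= k)%N)
          opnorm (proj I *m Rmat rho *m proj I)).

Definition ell (rho : 'M[C]_d) : nat :=
  \max_(I : {set 'I_d} | \rank (proj I *m rho *m proj I) == 1%N)
     \rank (proj I *m dephase rho *m proj I).

(* lambda(rho); the big max over an empty range is 0 *)
Definition lam (rho : 'M[C]_d) : R :=
  \big[Num.max/0]_(ij : 'I_d * 'I_d |
       (ij.1 < ij.2)%N && (cabs (Rmat rho ij.1 ij.2) < 1))
     cabs (Rmat rho ij.1 ij.2).

End Defs.

(* Main.v *)
Require Import Defs.
From HB Require Import structures.
From mathcomp Require Import all_boot all_order all_algebra.
From mathcomp Require Import complex.
From mathcomp Require Import all_classical all_reals all_analysis.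
From mathcomp Require Import ring lra.
Import Order.TTheory GRing.Theory Num.Theory.
Local Open Scope ring_scope.
Set Implicit Arguments. Unset Strict Implicit.

Section Cabs.
Variable R : realType.
Local Notation C := R[i].
Lemma cabsE (x : C) : `|x| = (cabs x)%:C%C.
Proof. by case: x => a b; rewrite normc_def. Qed.
Lemma cabs_ge0 (x : C) : 0 <= cabs x.
Proof. by rewrite -ler0c -cabsE. Qed.
Lemma cabsM (x y : C) : cabs (x * y) = cabs x * cabs y.
Proof. by apply: (@complexI R _ _); rewrite rmorphM -!cabsE normrM. Qed.
Lemma cabsJ (x : C) : cabs (x^*)%C = cabs x.
Proof. by apply: (@complexI R _ _); rewrite -!cabsE; exact: (norm_conjC x). Qed.
Lemma cabs_sum (I : finType) (P : pred I) (F : I -> C) :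
  cabs (\sum_(i | P i) F i) <= \sum_(i | P i) cabs (F i).
Proof.
rewrite -lecR -cabsE rmorph_sum /=.
rewrite [X in _ <= X](eq_bigr (fun i => `|F i|)) ?ler_norm_sum // => i _.

Qed.
Lemma cabs0 : cabs (0 : C) = 0.
Proof. by apply: (@complexI R _ _); rewrite -cabsE normr0. Qed.
Lemma cabs_eq0 (x : C) : (cabs x == 0) = (x == 0).
Proof.
apply/eqP/eqP => [h|->]; last exact: cabs0.
by apply/eqP; rewrite -normr_eq0 cabsE h.
Qed.
Lemma cabs_real (r : R) : 0 <= r -> cabs r%:C%C = r.
Proof. by move=> r0; apply: (@complexI R _ _); rewrite -cabsE ger0_norm // lecR. Qed.
Lemma cabsX (x : C) n : cabs (x ^+ n) = cabs x ^+ n.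
Proof. by apply: (@complexI R _ _); rewrite rmorphXn -!cabsE normrX. Qed.
End Cabs.
Section PSD.
Variable R : realType.
Local Notation C := R[i].
Variable d : nat.
Variable rho : 'M[C]_d.
Hypothesis Hst : is_state rho.

Definition ev (i : 'I_d) : 'I_d -> C := fun b => if b == i then 1 else 0.
Definition Bf (u w : 'I_d -> C) : C :=
  \sum_a \sum_b (u a)^* * rho a b * w b.

Lemma herm a b : rho b a = (rho a b)^*.
Proof.
case: Hst => H _ _.
by rewrite -{1}H /adjmx mxE.
Qed.

Lemma psd u : 0 <= Bf u u.
Proof.
case: Hst => _ H _.
have := H (\col_a u a); rewrite /Bf.
rewrite !mxE.
under eq_bigr do rewrite !mxE.
rewrite exchange_big /=.
under eq_bigr do (rewrite mulr_suml; under eq_bigr do rewrite !mxE).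
by [].
Qed.

Lemma sum_ev_r (F : 'I_d -> C) i : \sum_b F b * ev i b = F i.
Proof.
rewrite (bigD1 i) //= big1 ?addr0 /ev ?eqxx ?mulr1 // => b /negbTE ->.
by rewrite mulr0.
Qed.

Lemma sum_ev_l (F : 'I_d -> C) i : \sum_b (ev i b)^* * F b = F i.
Proof.
rewrite (bigD1 i) //= big1 ?addr0 /ev ?eqxx ?conjC1 ?mul1r // => b /negbTE ->.
by rewrite conjC0 mul0r.
Qed.

Lemma Be_r u i : Bf u (ev i) = \sum_a (u a)^* * rho a i.
Proof. by apply: eq_bigr => a _; rewrite sum_ev_r. Qed.

Lemma Be_l i w : Bf (ev i) w = \sum_b rho i b * w b.
Proof.
transitivity (\sum_a (ev i a)^* * (\sum_b rho a b * w b)).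
  by apply: eq_bigr => a _; rewrite mulr_sumr; apply: eq_bigr => b _; rewrite mulrA.
exact: (sum_ev_l (fun a => \sum_b rho a b * w b)).
Qed.

Lemma Bee i j : Bf (ev i) (ev j) = rho i j.
Proof. by rewrite Be_l sum_ev_r. Qed.

Lemma BJ u w : (Bf u w)^* = Bf w u.
Proof.
rewrite /Bf rmorph_sum exchange_big /=; apply: eq_bigr => b _.
rewrite rmorph_sum; apply: eq_bigr => a _.
rewrite !rmorphM /= conjCK -herm. ring.
Qed.

Lemma Blin_r u v w (al : C) :
  Bf u (fun b => v b - al * w b) = Bf u v - al * Bf u w.
Proof.
rewrite /Bf mulr_sumr -sumrB; apply: eq_bigr => a _.
rewrite mulr_sumr -sumrB; apply: eq_bigr => b _.
ring.
Qed.

Lemma Blin_l u v w (al : C) :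
  Bf (fun a => v a - al * w a) u = Bf v u - al^* * Bf w u.
Proof.
rewrite /Bf mulr_sumr -sumrB; apply: eq_bigr => a _.
rewrite mulr_sumr -sumrB; apply: eq_bigr => b _.
rewrite rmorphB rmorphM /=.
ring.
Qed.

Lemma rho_real i : (rho i i)^* = rho i i.
Proof. by rewrite -herm. Qed.

Lemma rho_ge0 i : 0 <= rho i i.
Proof. by rewrite -Bee; apply: psd. Qed.

Lemma schur i v : rho i i != 0 ->
  Bf (fun b => v b - (Bf (ev i) v / rho i i) * ev i b)
     (fun b => v b - (Bf (ev i) v / rho i i) * ev i b)
  = Bf v v - Bf (ev i) v * (Bf (ev i) v)^* / rho i i.
Proof.
move=> r0.
rewrite Blin_l !Blin_r Bee -(BJ (ev i) v).
rewrite rmorphM /= rmorphV ?unitfE // /=.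
rewrite rho_real.
by field.
Qed.

Lemma cs i v : rho i i != 0 ->
  Bf (ev i) v * (Bf (ev i) v)^* <= rho i i * Bf v v.
Proof.
move=> r0.
have := psd (fun b => v b - (Bf (ev i) v / rho i i) * ev i b).
rewrite schur // => h.
have rp : 0 < rho i i by rewrite lt_def r0 rho_ge0.
have := mulr_ge0 (ltW rp) h.
set s := Bf (ev i) v.
have -> : rho i i * (Bf v v - s * s^* / rho i i) = rho i i * Bf v v - s * s^*.
  by field.
by rewrite subr_ge0.
Qed.
End PSD.
Arguments ev {R d}.
Section Real.
Variable R : realType.
Local Notation C := R[i].
Variable d : nat.
Variable rho : 'M[C]_d.
Hypothesis Hst : is_state rho.

Definition rd a := cabs (rho a a).

Lemma rhoE a : rho a a = (rd a)%:C%C.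
Proof. by rewrite /rd -cabsE ger0_norm // (rho_ge0 Hst). Qed.

Lemma rd_ge0 a : 0 <= rd a.
Proof. exact: cabs_ge0. Qed.

Lemma rd_neq0 a : (rd a != 0) = (rho a a != 0).
Proof. by rewrite /rd cabs_eq0. Qed.

Lemma sqnormE (x : C) : x * x^* = ((cabs x)^+2)%:C%C.
Proof. by rewrite -normCK cabsE rmorphXn. Qed.

Lemma F2 a b : rho a a != 0 -> cabs (rho a b) ^+ 2 <= rd a * rd b.
Proof.
move=> a0; have := cs Hst (ev b) a0.
by rewrite !Bee sqnormE !rhoE -rmorphM lecR.
Qed.

Lemma F3 i j k : rho i i != 0 -> rho k k != 0 ->
  cabs (rho i j) ^+ 2 = rd i * rd j -> rho k i * rho i j = rho k j * rho i i.
Proof.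
move=> i0 k0 eq.
set al := rho i j / rho i i.
set u := fun b => ev j b - al * ev i b.
have Buu : Bf rho u u = 0.
  have := schur Hst (ev j) i0.
  rewrite !Bee => ->.
  rewrite sqnormE eq rmorphM /= -!rhoE.
  by field.
have := cs Hst u k0.
rewrite Buu mulr0 sqnormE lecR.
have := cabs_ge0 (Bf rho (ev k) u).
move=> h1 h2.
have : cabs (Bf rho (ev k) u) = 0 by nra.
move/eqP; rewrite cabs_eq0 /u Blin_r !Bee subr_eq0 /al => /eqP ->.
by field.
Qed.

Definition Dg (a : 'I_d) : C := if rho a a != 0 then (sqrtC (rho a a))^-1 else 0.

Lemma RmatE a b : Rmat rho a b = Dg a * rho a b * Dg b.
Proof. by rewrite /Rmat /dephase_isqrt mul_mx_diag mul_diag_mx !mxE. Qed.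

Lemma cabsV (x : C) : cabs x^-1 = (cabs x)^-1.
Proof. by apply: (@complexI R _ _); rewrite fmorphV -!cabsE normfV. Qed.
Lemma cabs_Dg2 a : rho a a != 0 -> cabs (Dg a) ^+ 2 * rd a = 1.
Proof.
move=> a0; rewrite /Dg a0 cabsV exprVn -cabsX sqrtCK -/(rd a) mulVf //.
by rewrite rd_neq0.
Qed.

Lemma Rabs2 a b : rho a a != 0 -> rho b b != 0 ->
  cabs (Rmat rho a b) ^+ 2 * (rd a * rd b) = cabs (rho a b) ^+ 2.
Proof.
move=> a0 b0; rewrite RmatE !cabsM.
transitivity ((cabs (Dg a) ^+ 2 * rd a) * (cabs (Dg b) ^+ 2 * rd b) * cabs (rho a b) ^+ 2).
  by ring.
by rewrite !cabs_Dg2 // !mul1r.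
Qed.

Lemma R0 a b : ~~ ((rho a a != 0) && (rho b b != 0)) -> Rmat rho a b = 0.
Proof.
rewrite RmatE /Dg; case: (rho a a != 0); case: (rho b b != 0) => //= _; by rewrite ?mulr0 ?mul0r.
Qed.

Lemma Rle1 a b : cabs (Rmat rho a b) <= 1.
Proof.
have [/andP [a0 b0] | h] := boolP ((rho a a != 0) && (rho b b != 0)); last first.
  by rewrite R0 // cabs0.
have := Rabs2 a0 b0; have := F2 b a0.
have := cabs_ge0 (Rmat rho a b).
have : 0 < rd a by rewrite lt_def rd_neq0 a0 rd_ge0.
have : 0 < rd b by rewrite lt_def rd_neq0 b0 rd_ge0.
set x := cabs (Rmat rho a b); set n := cabs (rho a b).
move=> pa pb x0 hn hx.
have pab : 0 < rd a * rd b by apply: mulr_gt0.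
have : x ^+ 2 <= 1.
  rewrite -(ler_pM2r pab) mul1r hx //.
move=> h2; nra.
Qed.

Lemma Rsym a b : cabs (Rmat rho a b) = cabs (Rmat rho b a).
Proof.
rewrite !RmatE !cabsM (herm Hst a b) cabsJ; ring.
Qed.

Lemma Req1 a b : rho a a != 0 -> cabs (Rmat rho a b) = 1 ->
  rho b b != 0 /\ cabs (rho a b) ^+ 2 = rd a * rd b.
Proof.
move=> a0 h1.
have b0 : rho b b != 0.
  apply/negP => b0; move: h1; rewrite R0 ?cabs0.
    by move/eqP; rewrite eq_sym oner_eq0.
  by rewrite b0 andbF.
split=> //.
by rewrite -(Rabs2 a0 b0) h1 expr1n mul1r.
Qed.

Lemma Raa a : rho a a != 0 -> cabs (Rmat rho a a) = 1.
Proof.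
move=> a0; have := Rabs2 a0 a0.
have := cabs_ge0 (Rmat rho a a).
have : 0 < rd a by rewrite lt_def rd_neq0 a0 rd_ge0.
rewrite -/(rd a).
set x := cabs (Rmat rho a a).
move=> pa x0 h.
have : x ^+ 2 = 1.
  apply: (mulIf (x := rd a * rd a)); first by rewrite mulf_neq0 // gt_eqF.
  by rewrite h mul1r.
move=> h2; nra.
Qed.
End Real.
Section Rank.
Variable R : realType.
Local Notation C := R[i].
Variable d : nat.
Variable rho : 'M[C]_d.
Hypothesis Hst : is_state rho.
Local Notation PJ J := (@Defs.proj R d J).

Lemma projE (J : {set 'I_d}) (A : 'M[C]_d) x y :
  (PJ J *m A *m PJ J) x y = (x \in J)%:R * A x y * (y \in J)%:R.
Proof. by rewrite /Defs.proj mul_mx_diag mul_diag_mx !mxE. Qed.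

Lemma sum_ifl (F : 'I_d -> C) j : \sum_x (if x == j then 1 else 0) * F x = F j.
Proof.
rewrite (bigD1 j) //= eqxx mul1r big1 ?addr0 // => x /negbTE ->; by rewrite mul0r.
Qed.

Lemma sum_ifr (F G : 'I_d -> C) j : \sum_x F x * (if x == j then G x else 0) = F j * G j.
Proof.
rewrite (bigD1 j) //= eqxx big1 ?addr0 // => x /negbTE ->; by rewrite mulr0.
Qed.

Variables (J : {set 'I_d}) (a : 'I_d).
Hypotheses (aJ : a \in J) (a0 : rho a a != 0)
  (HJ : forall b, b \in J -> rho b b != 0 /\ cabs (rho a b) ^+ 2 = rd rho a * rd rho b).

Lemma rank1 : \rank (PJ J *m rho *m PJ J) == 1%N.
Proof.
pose u : 'M[C]_(d, 1) := \matrix_(x < d, k < 1) ((x \in J)%:R * rho x a / rho a a).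
pose w : 'M[C]_(1, d) := \matrix_(k < 1, y < d) (rho a y * (y \in J)%:R).
have Mne : PJ J *m rho *m PJ J != 0.
  apply/negP => /eqP /matrixP /(_ a a); rewrite projE mxE aJ !mul1r mulr1.
  by apply/eqP.
rewrite eqn_leq lt0n mxrank_eq0 Mne andbT.
have -> : PJ J *m rho *m PJ J = u *m w.
  apply/matrixP => x y; rewrite projE mxE big_ord1 !mxE.
  have [xJ|xJ] := boolP (x \in J); last by rewrite !mul0r.
  have [yJ|yJ] := boolP (y \in J); last by rewrite !mulr0.
  have [x0 _] := HJ xJ; have [_ ey] := HJ yJ.
  have := F3 Hst a0 x0 ey => e.
  rewrite !mul1r !mulr1 -mulrA mulrCA e; field; done.
by apply: leq_trans (mxrankM_maxl _ _) (rank_leq_col _).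
Qed.

Lemma rank2 : (#|J| <= \rank (PJ J *m dephase rho *m PJ J))%N.
Proof.
set N := PJ J *m dephase rho *m PJ J.
pose f : 'I_#|J| -> 'I_d := enum_val.
have fJ p : f p \in J by exact: enum_valP.
have finj : injective f by exact: enum_val_inj.
pose Bm : 'M[C]_(#|J|, d) := \matrix_(p < #|J|, x < d) (if x == f p then 1 else 0).
pose Cm : 'M[C]_(d, #|J|) := \matrix_(x < d, q < #|J|) (if x == f q then (rho x x)^-1 else 0).
have E : Bm *m N *m Cm = 1%:M.
  apply/matrixP => p q; rewrite !mxE.
  rewrite (eq_bigr (fun y => (\sum_j (if j == f p then 1 else 0) * N j y) * (if y == f q then (rho y y)^-1 else 0))); last first.
    by move=> y _; rewrite !mxE; congr (_ * _); apply: eq_bigr => j _; rewrite /Bm mxE.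
  rewrite sum_ifr sum_ifl.
  rewrite projE /dephase !mxE fJ fJ (inj_eq finj).
  have [<-|pq] := eqVneq p q; rewrite /= ?mulr1n ?mulr0n ?mul1r ?mulr1.
    by have [fp0 _] := HJ (fJ p); rewrite mulfV.
  by rewrite mul0r.
have := mxrank1 C #|J|; rewrite -E => <-.
exact: leq_trans (mxrankM_maxl _ _) (mxrankM_maxr _ _).
Qed.

Lemma ell_ge : (#|J| <= ell rho)%N.
Proof.
apply: leq_trans rank2 _.
exact: (leq_bigmax_cond (F := fun I => \rank (PJ I *m dephase rho *m PJ I)) J rank1).
Qed.

End Rank.
Section Schur.
Variable R : realType.
Variable I : finType.

Lemma wcs (m x : I -> R) : (forall b, 0 <= m b) ->
  (\sum_b m b * x b) ^+ 2 <= (\sum_b m b) * (\sum_b m b * x b ^+ 2).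
Proof.
move=> m0.
set L := (\sum_b m b * x b) ^+ 2.
set Rr := (\sum_b m b) * (\sum_b m b * x b ^+ 2).
have E1 : L = \sum_b \sum_c m b * m c * (x b * x c).
  rewrite /L expr2 mulr_suml; apply: eq_bigr => b _.
  rewrite mulr_sumr; apply: eq_bigr => c _; ring.
have E2 : Rr = \sum_b \sum_c m b * m c * x c ^+ 2.
  rewrite /Rr mulr_suml; apply: eq_bigr => b _.
  rewrite mulr_sumr; apply: eq_bigr => c _; ring.
have E3 : Rr = \sum_b \sum_c m b * m c * x b ^+ 2.
  rewrite E2 exchange_big /=; apply: eq_bigr => b _.
  apply: eq_bigr => c _; ring.
have E : \sum_b \sum_c m b * m c * (x b - x c) ^+ 2 = Rr + Rr - 2 * L.
  rewrite {1}E3 {1}E2 E1 mulr_sumr -big_split -sumrB /=; apply: eq_bigr => b _.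
  rewrite mulr_sumr -big_split -sumrB /=; apply: eq_bigr => c _; ring.
have : 0 <= \sum_b \sum_c m b * m c * (x b - x c) ^+ 2.
  apply: sumr_ge0 => b _; apply: sumr_ge0 => c _.
  by apply: mulr_ge0; [apply: mulr_ge0|apply: sqr_ge0].
rewrite E => h; lra.
Qed.

Lemma schur_test (m : I -> I -> R) (x y : I -> R) (T : R) :
  (forall a b, 0 <= m a b) -> (forall a b, m a b = m b a) ->
  (forall a, \sum_b m a b <= T) ->
  (forall a, 0 <= y a) -> (forall a, y a <= \sum_b m a b * x b) -> 0 <= T ->
  \sum_a y a ^+ 2 <= T ^+ 2 * \sum_b x b ^+ 2.
Proof.
move=> m0 msym rowT y0 yle T0.
apply: (@le_trans _ _ (\sum_a T * \sum_b m a b * x b ^+ 2)).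
  apply: ler_sum => a _.
  have h1 : y a ^+ 2 <= (\sum_b m a b * x b) ^+ 2.
    have := y0 a; have := yle a; nra.
  apply: (le_trans h1); apply: (le_trans (wcs x (m0 a))).
  apply: ler_wpM2r; last exact: rowT.
  by apply: sumr_ge0 => b _; apply: mulr_ge0 => //; apply: sqr_ge0.
rewrite -mulr_sumr expr2 -mulrA; apply: ler_wpM2l => //.
rewrite exchange_big mulr_sumr /=; apply: ler_sum => b _.
rewrite -mulr_suml; apply: ler_wpM2r; first exact: sqr_ge0.
under eq_bigr do rewrite msym.
exact: rowT.
Qed.
End Schur.
Section Main.
Variable R : realType.
Local Notation C := R[i].
Variable d : nat.
Variable rho : 'M[C]_d.
Hypothesis Hst : is_state rho.
Local Notation PJ J := (@Defs.proj R d J).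

Lemma lam_ge0 : 0 <= lam rho.
Proof. exact: bigmax_ge_id. Qed.

Lemma lam_le1 : lam rho <= 1.
Proof.
apply: bigmax_le => // ij /andP [_ h]; exact: ltW.
Qed.

Lemma lam_ge a b : rho a a != 0 -> cabs (Rmat rho a b) < 1 ->
  cabs (Rmat rho a b) <= lam rho.
Proof.
move=> a0 h.
case: (ltngtP a b) => hab.
- by apply: (@le_bigmax_cond _ _ _ 0 (a, b)) => /=; rewrite hab h.
- rewrite (Rsym Hst a b); apply: (@le_bigmax_cond _ _ _ 0 (b, a)) => /=.
  by rewrite hab -(Rsym Hst a b) h.
- have eab : a = b by apply: val_inj.
  by move: h; rewrite -eab (Raa a0) ltxx.
Qed.

Lemma exists_nz : exists a, rho a a != 0.
Proof.
case: Hst => _ _ htr.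
case: (boolP [exists a, rho a a != 0]) => [/existsP //|/existsPn h].
have : \tr rho = 0.
  rewrite /mxtrace big1 // => a _.
  by have := h a; rewrite negbK => /eqP.
by rewrite htr => /eqP; rewrite oner_eq0.
Qed.

Lemma ell_ge1 : (1 <= ell rho)%N.
Proof.
have [a a0] := exists_nz.
have := @ell_ge R d rho Hst [set a] a (set11 a) a0.
rewrite cards1; apply => b; rewrite inE => /eqP ->; split => //.
Qed.
End Main.
Section Main2.
Variable R : realType.
Local Notation C := R[i].
Variable d : nat.
Variable rho : 'M[C]_d.
Hypothesis Hst : is_state rho.
Local Notation PJ J := (@Defs.proj R d J).

Definition TT (k : nat) : R := (ell rho)%:R + lam rho * (k%:R - (ell rho)%:R).

Lemma TT_ge1 k : (1 <= k)%N -> 1 <= TT k.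
Proof.
move=> k1.
have e1 : 1 <= (ell rho)%:R :> R by rewrite ler1n ell_ge1.
have kk : 1 <= k%:R :> R by rewrite ler1n.
have := lam_ge0 rho; have := lam_le1 rho.
rewrite /TT; nra.
Qed.

Lemma cabs_b (b : bool) : cabs (b%:R : C) = b%:R.
Proof.
case: b => /=; last exact: cabs0.
by apply: (@complexI R _ _); rewrite -cabsE normr1.
Qed.

Lemma sum_ind (A : {set 'I_d}) : \sum_b ((b \in A)%:R : R) = #|A|%:R.
Proof.
rewrite (eq_bigr (fun b => if b \in A then 1 else 0)); last by move=> b _; case: (b \in A).
by rewrite -big_mkcond sumr_const.
Qed.

Lemma row_bound k (I : {set 'I_d}) a : (#|I| <= k)%N ->
  \sum_b cabs ((PJ I *m Rmat rho *m PJ I) a b) <= TT k.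
Proof.
move=> Ik.
have T0 : 0 <= TT k.
  have := lam_ge0 rho; have := lam_le1 rho.
  have : 0 <= (ell rho)%:R :> R by [].
  have : 0 <= k%:R :> R by [].
  rewrite /TT; nra.
under eq_bigr do rewrite projE !cabsM !cabs_b.
have [aI|aI] := boolP (a \in I); last first.
  by rewrite big1 // => b _; rewrite /= mulr0n !mul0r.
have [a0|a0] := boolP (rho a a != 0); last first.
  by rewrite big1 // => b _; rewrite R0 ?cabs0 ?mulr0 ?mul0r // (negbTE a0).
set J := [set b in I | cabs (Rmat rho a b) == 1].
have lJ : (#|J| <= ell rho)%N.
  apply: (@ell_ge R d rho Hst J a).
  - by rewrite inE aI (Raa a0) eqxx.
  - exact: a0.
  - by move=> b; rewrite inE => /andP [_ /eqP h]; exact: Req1 a0 h.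
apply: (@le_trans _ _ (\sum_b (lam rho * (b \in I)%:R + (1 - lam rho) * (b \in J)%:R))).
  apply: ler_sum => b _; rewrite /= mulr1n mul1r.
  have := lam_ge0 rho; have := lam_le1 rho => l1 l0.
  have [bI|bI] := boolP (b \in I); last first.
    have bJ : b \notin J by rewrite inE (negbTE bI).
    by rewrite (negbTE bJ) /= !mulr0n !mulr0 addr0.
  have [c1|c1] := eqVneq (cabs (Rmat rho a b)) 1.
    have bJ : b \in J by rewrite inE bI c1 eqxx.
    by rewrite bJ /= !mulr1n c1 !mulr1; lra.
  have bJ : b \notin J by rewrite inE bI c1.
  rewrite (negbTE bJ) /= mulr0n mulr1n !mulr1 mulr0 addr0.
  apply: lam_ge => //.
  by rewrite lt_neqAle c1 (Rle1 Hst).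
rewrite big_split /= -!mulr_sumr !sum_ind.
have := lam_ge0 rho; have := lam_le1 rho.
have : (#|I|%:R <= k%:R :> R) by rewrite ler_nat.
have : (#|J|%:R <= (ell rho)%:R :> R) by rewrite ler_nat.
rewrite /TT; nra.
Qed.
End Main2.
Section Main3.
Local Open Scope classical_set_scope.
Variable R : realType.
Local Notation C := R[i].
Variable d : nat.
Variable rho : 'M[C]_d.
Hypothesis Hst : is_state rho.
Local Notation PJ J := (@Defs.proj R d J).

Lemma opnorm_bound k (I : {set 'I_d}) : (1 <= k)%N -> (#|I| <= k)%N ->
  opnorm (PJ I *m Rmat rho *m PJ I) <= TT rho k.
Proof.
move=> k1 Ik.
have T0 : 0 <= TT rho k by apply: le_trans (TT_ge1 Hst k1).
set A := PJ I *m Rmat rho *m PJ I.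
rewrite /opnorm.
set S := [set r : R | exists v : 'cV[C]_d, vnorm v = 1 /\ r = vnorm (A *m v)].
have [S0|S0] := pselect (S !=set0); last first.
  have : ~~ (S != set0) by apply/negP => /set0P.
  by rewrite negbK => /eqP ->; rewrite sup0.
apply: ge_sup => // r [v [hv ->]].
have hs0 : 0 <= \sum_b cabs (v b 0) ^+ 2 by apply: sumr_ge0 => b _; apply: sqr_ge0.
have hv1 : \sum_b cabs (v b 0) ^+ 2 = 1.
  by rewrite -(sqr_sqrtr hs0); move: hv; rewrite /vnorm => ->; rewrite expr1n.
rewrite /vnorm -(ger0_norm T0) -sqrtr_sqr ler_sqrt; last exact: sqr_ge0.
rewrite -[X in _ <= X]mulr1 -hv1.
apply: (@schur_test R _ (fun a b => cabs (A a b)) (fun b => cabs (v b 0))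
          (fun a => cabs ((A *m v) a 0)) (TT rho k)) => //.
- by move=> a b; apply: cabs_ge0.
- by move=> a b; rewrite /A !projE !cabsM (Rsym Hst a b); ring.
- by move=> a; apply: row_bound.
- by move=> a; apply: cabs_ge0.
- move=> a; rewrite mxE; apply: le_trans (cabs_sum _ _) _.
  by apply: ler_sum => b _; rewrite cabsM.
Qed.
End Main3.

Unset Implicit Arguments.
Theorem lemma7 (R : realType) (d : nat) (rho : 'M[R[i]]_d) (k : nat) :
  is_state rho -> (1 <= k <= d)%N ->
  mu k rho <= log2 ((ell rho)%:R + lam rho * (k%:R - (ell rho)%:R)).
Proof.
move=> Hst /andP [k1 kd].
rewrite -/(TT rho k) /mu /log2.
set M := \big[Num.max/0]_(I : {set 'I_d} | (#|I| <= k)%N) _.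
have M0 : 0 <= M by apply: bigmax_ge_id.
have T1 := TT_ge1 Hst k1.
have MT : M <= TT rho k.
  apply: bigmax_le; first by apply: le_trans T1.
  by move=> I Ik; apply: opnorm_bound.
have l2 : 0 < ln (2 : R) by apply: ln_gt0; rewrite ltr1n.
apply: ler_wpM2r; first by rewrite invr_ge0 ltW.
have [Mz|Mp] := eqVneq M 0.
  by rewrite Mz ln0 // ln_ge0.
rewrite ler_ln //.
  by rewrite posrE lt_def Mp M0.
by rewrite posrE (lt_le_trans ltr01 T1).
Qed.
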